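(* The categories $\mathsf{Dial}_M(\mathsf{Set})$, for $M$ a biclosed poset, form a sound and complete model of the Lambek Calculus $\mathrm{L}$ (without modalities). Precisely: - Soundness: for every biclosed poset $M$, every interpretation of the atoms in $\mathsf{Dial}_M(\mathsf{Set})$, and every sequent $A_1,\dots,A_n\vdash B$ derivable in $\mathrm{L}$, there is a morphism $[\![A_1]\!]\otimes\cdots\otimes[\![A_n]\!]\to[\![B]\!]$, where the empty tensor is $I$. - Completeness: if a sequent is valid in this sense in all such models, then it is derivable in $\mathrm{L}$.
   Context: Biclosed poset: a partially ordered monoid $(M,\le,\circ,e)$, not necessarily commutative, with $\circ$ monotone in each argument, in which for all $a,b\in M$ there exist - $a\rightharpoonup b$, the largest $x$ with $a\circ x\le b$; - $b\leftharpoonup a$, the largest $x$ with $x\circ a\le b$. $\mathsf{Dial}_M(\mathsf{Set})$: - Objects are $(U,X,\alpha)$ with $U,X$ sets and $\alpha:U\times X\to M$. - Morphisms $(f,F):(U,X,\alpha)\to(V,Y,\beta)$ are pairs $f:U\to V$, $F:Y\to X$ with $\alpha(u,F(y))\le\beta(f(u),y)$ for all $u,y$. - Composition is $(g,G)\circ(f,F)=(gf,FG)$. Monoidal biclosed structure: - Tensor: $(U,X,\alpha)\otimes(V,Y,\beta)=(U\times V,(V\to X)\times(U\to Y),\alpha\otimes\beta)$ with $(\alpha\otimes\beta)((u,v),(h,k))=\alpha(u,h(v))\circ\beta(k(u),v)$. - Unit: $I=(\mathbb{1},\mathbb{1},e)$. - For $A=(U,X,\alpha)$ and $C=(V,Y,\beta)$,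 $A\rightharpoonup C=((U\to V)\times(Y\to X),U\times Y,\alpha\rightharpoonup\beta)$ with $(\alpha\rightharpoonup\beta)((h,H),(u,y))=\alpha(u,H(y))\rightharpoonup\beta(h(u),y)$. - Likewise $C\leftharpoonup A=((U\to V)\times(Y\to X),U\times Y,\beta\leftharpoonup\alpha)$ with $(\beta\leftharpoonup\alpha)((h,H),(u,y))=\beta(h(u),y)\leftharpoonup\alpha(u,H(y))$. An interpretation assigns an object to each atom and extends to formulas by $[\![I]\!]=I$, $[\![A\otimes B]\!]=[\![A]\!]\otimes[\![B]\!]$, $[\![A\rightharpoonup B]\!]=[\![A]\!]\rightharpoonup[\![B]\!]$, $[\![A\leftharpoonup B]\!]=[\![A]\!]\leftharpoonup[\![B]\!]$. The Lambek Calculus $\mathrm{L}$: formulas are built from atoms, the constant $I$, and the binary connectives $\otimes$, $\rightharpoonup$, $\leftharpoonup$. Sequents are $\Gamma\vdash A$ with $\Gamma$ a finite sequence (not a multiset) of formulas. The rules are: - axiom: $A\vdash A$; - cut: from $\Gamma\vdash A$ and $\Delta_1,A,\Delta_2\vdash B$ infer $\Delta_1,\Gamma,\Delta_2\vdash B$; - $I$-right: $\vdash I$; - $I$-left: from $\Gamma,\Delta\vdash A$ infer $\Gamma,I,\Delta\vdash A$; - $\otimes$-left: from $\Gamma,A,B,\Delta\vdash C$ infer $\Gamma,A\otimes B,\Delta\vdash C$; - $\otimes$-right: from $\Gamma\vdash A$ and $\Delta\vdash B$ infer $\Gamma,\Delta\vdash A\otimes B$; - $\rightharpoonup$-right: from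 $A,\Gamma\vdash B$ infer $\Gamma\vdash A\rightharpoonup B$; - $\rightharpoonup$-left: from $\Gamma\vdash A$ and $\Delta_1,B,\Delta_2\vdash C$ infer $\Delta_1,\Gamma,A\rightharpoonup B,\Delta_2\vdash C$; - $\leftharpoonup$-right: from $\Gamma,B\vdash A$ infer $\Gamma\vdash A\leftharpoonup B$; - $\leftharpoonup$-left: from $\Gamma\vdash B$ and $\Delta_1,A,\Delta_2\vdash C$ infer $\Delta_1,A\leftharpoonup B,\Gamma,\Delta_2\vdash C$. There are no weakening, contraction or exchange rules. *)

(* Defs.v *)
From Stdlib Require Import List.
Import ListNotations.

Record BiclosedPoset := {
  car : Type;
  le : car -> car -> Prop;
  op : car -> car -> car;
  e : car;
  le_refl : forall a, le a a;
  le_trans : forall a b c, le a b -> le b c -> le a c;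
  le_antisym : forall a b, le a b -> le b a -> a = b;
  op_assoc : forall a b c, op (op a b) c = op a (op b c);
  op_unit_l : forall a, op e a = a;
  op_unit_r : forall a, op a e = a;
  op_mono_l : forall a a' b, le a a' -> le (op a b) (op a' b);
  op_mono_r : forall a b b', le b b' -> le (op a b) (op a b');
  rimp : car -> car -> car;
  rimp_in : forall a b, le (op a (rimp a b)) b;
  rimp_max : forall a b x, le (op a x) b -> le x (rimp a b);
  limp : car -> car -> car;
  limp_in : forall a b, le (op (limp b a) a) b;
  limp_max : forall a b x, le (op x a) b -> le x (limp b a)
}.

Record DObj (M : BiclosedPoset) := mkDObj {
  dU : Type;
  dX : Type;
  drel : dU -> dX -> car M
}.
Arguments mkDObj {M}.
Arguments dU {M}.
Arguments dX {M}.
Arguments drel {M}.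

Record DHom {M : BiclosedPoset} (A C : DObj M) := {
  hf : dU A -> dU C;
  hF : dX C -> dX A;
  hcond : forall u y, le M (drel A u (hF y)) (drel C (hf u) y)
}.

Definition dtensor {M : BiclosedPoset} (A B : DObj M) : DObj M :=
  mkDObj (dU A * dU B)%type ((dU B -> dX A) * (dU A -> dX B))%type
    (fun uv hk => op M (drel A (fst uv) (fst hk (snd uv)))
                       (drel B (snd uv) (snd hk (fst uv)))).

Definition dunit (M : BiclosedPoset) : DObj M :=
  mkDObj unit unit (fun _ _ => e M).

Definition drimp {M : BiclosedPoset} (A C : DObj M) : DObj M :=
  mkDObj ((dU A -> dU C) * (dX C -> dX A))%type (dU A * dX C)%type
    (fun hH uy => rimp M (drel A (fst uy) (snd hH (snd uy)))
                         (drel C (fst hH (fst uy)) (snd uy))).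

Definition dlimp {M : BiclosedPoset} (C A : DObj M) : DObj M :=
  mkDObj ((dU A -> dU C) * (dX C -> dX A))%type (dU A * dX C)%type
    (fun hH uy => limp M (drel C (fst hH (fst uy)) (snd uy))
                         (drel A (fst uy) (snd hH (snd uy)))).

Inductive formula : Type :=
| Atom : nat -> formula
| One : formula
| Tens : formula -> formula -> formula
| RImp : formula -> formula -> formula
| LImp : formula -> formula -> formula.

Inductive derivable : list formula -> formula -> Prop :=
| d_ax : forall A, derivable [A] A
| d_cut : forall G D1 D2 A B,
    derivable G A -> derivable (D1 ++ A :: D2) B ->
    derivable (D1 ++ G ++ D2) B
| d_Ir : derivable [] One
| d_Il : forall G D A, derivable (G ++ D) A -> derivable (G ++ One :: D) A
| d_tensl : forall G D A B C,
    derivable (G ++ A :: B :: D) C -> derivable (G ++ Tens A B :: D) C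
| d_tensr : forall G D A B,
    derivable G A -> derivable D B -> derivable (G ++ D) (Tens A B)
| d_rimpr : forall G A B, derivable (A :: G) B -> derivable G (RImp A B)
| d_rimpl : forall G D1 D2 A B C,
    derivable G A -> derivable (D1 ++ B :: D2) C ->
    derivable (D1 ++ G ++ RImp A B :: D2) C
| d_limpr : forall G A B, derivable (G ++ [B]) A -> derivable G (LImp A B)
| d_limpl : forall G D1 D2 A B C,
    derivable G B -> derivable (D1 ++ A :: D2) C ->
    derivable (D1 ++ LImp A B :: G ++ D2) C.

Fixpoint interp {M : BiclosedPoset} (v : nat -> DObj M) (A : formula) : DObj M :=
  match A with
  | Atom n => v n
  | One => dunit M
  | Tens A B => dtensor (interp v A) (interp v B)
  | RImp A B => drimp (interp v A) (interp v B)
  | LImp A B => dlimp (interp v A) (interp v B)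
  end.

Fixpoint interp_ctx {M : BiclosedPoset} (v : nat -> DObj M) (G : list formula)
  : DObj M :=
  match G with
  | [] => dunit M
  | [A] => interp v A
  | A :: G' => dtensor (interp v A) (interp_ctx v G')
  end.

Definition valid (G : list formula) (B : formula) : Prop :=
  forall (M : BiclosedPoset) (v : nat -> DObj M),
    inhabited (DHom (interp_ctx v G) (interp v B)).

(* Main.v *)
From Stdlib Require Import ProofIrrelevance ClassicalEpsilon FunctionalExtensionality PropExtensionality.
Require Import Defs.
From Stdlib Require Import List.
Import ListNotations.

Arguments hf {M A C} _ _.
Arguments hF {M A C} _ _.
Arguments hcond {M A C} _ _ _.

Lemma le_eq {M : BiclosedPoset} (a b : car M) : a = b -> le M a b.
Proof. intros ->; apply le_refl. Qed.

Definition hid {M} (A : DObj M) : DHom A A.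
Proof. refine (@Build_DHom _ A A (fun u => u) (fun x => x) _). intros; apply le_refl. Defined.

Definition hcomp {M} {A B C : DObj M} (g : DHom B C) (f : DHom A B) : DHom A C.
Proof.
  refine (@Build_DHom _ A C (fun u => hf g (hf f u)) (fun z => hF f (hF g z)) _).
  intros u z. eapply le_trans; [apply (hcond f)| apply (hcond g)].
Defined.

Definition htens {M} {A A' B B' : DObj M} (f : DHom A A') (g : DHom B B') :
  DHom (dtensor A B) (dtensor A' B').
Proof.
  refine (@Build_DHom _ (dtensor A B) (dtensor A' B') (fun (uv : dU A * dU B) => (hf f (fst uv), hf g (snd uv))) (fun (hk : (dU B' -> dX A') * (dU A' -> dX B')) =>
              ((fun v => hF f (fst hk (hf g v))), (fun u => hF g (snd hk (hf f u))))) _).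
  intros [u v] [h k]; simpl.
  eapply le_trans; [apply op_mono_l, (hcond f) | apply op_mono_r, (hcond g)].
Defined.

Definition lunit {M} (A : DObj M) : DHom (dtensor (dunit M) A) A.
Proof.
  refine (@Build_DHom _ (dtensor (dunit M) A) A (fun (uv : unit * dU A) => snd uv) (fun x => ((fun _ => tt), (fun _ => x)) : (dU A -> unit) * (unit -> dX A)) _).
  intros [u v] x; simpl. apply le_eq, op_unit_l.
Defined.

Definition lunit_inv {M} (A : DObj M) : DHom A (dtensor (dunit M) A).
Proof.
  refine (@Build_DHom _ A (dtensor (dunit M) A) (fun u => (tt, u) : unit * dU A) (fun (hk : (dU A -> unit) * (unit -> dX A)) => snd hk tt) _).
  intros u [h k]; simpl. apply le_eq; symmetry; apply op_unit_l.
Defined.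

Definition runit {M} (A : DObj M) : DHom (dtensor A (dunit M)) A.
Proof.
  refine (@Build_DHom _ (dtensor A (dunit M)) A (fun (uv : dU A * unit) => fst uv) (fun x => ((fun _ => x), (fun _ => tt)) : (unit -> dX A) * (dU A -> unit)) _).
  intros [u v] x; simpl. apply le_eq, op_unit_r.
Defined.

Definition runit_inv {M} (A : DObj M) : DHom A (dtensor A (dunit M)).
Proof.
  refine (@Build_DHom _ A (dtensor A (dunit M)) (fun u => (u, tt) : dU A * unit) (fun (hk : (unit -> dX A) * (dU A -> unit)) => fst hk tt) _).
  intros u [h k]; simpl. apply le_eq; symmetry; apply op_unit_r.
Defined.

Definition hassoc {M} (A B C : DObj M) :
  DHom (dtensor (dtensor A B) C) (dtensor A (dtensor B C)).
Proof.
  refine (@Build_DHom _ (dtensor (dtensor A B) C) (dtensor A (dtensor B C)) (fun (u : (dU A * dU B) * dU C) =>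
              (fst (fst u), (snd (fst u), snd u))) (fun (hk : (dU B * dU C -> dX A) *
                            (dU A -> (dU C -> dX B) * (dU B -> dX C))) =>
              ((fun c => ((fun b => fst hk (b, c)), (fun a => fst (snd hk a) c))),
               (fun ab => snd (snd hk (fst ab)) (snd ab)))) _).
  intros [[a b] c] [h k]; simpl. apply le_eq, op_assoc.
Defined.

Definition hassoc_inv {M} (A B C : DObj M) :
  DHom (dtensor A (dtensor B C)) (dtensor (dtensor A B) C).
Proof.
  refine (@Build_DHom _ (dtensor A (dtensor B C)) (dtensor (dtensor A B) C) (fun (u : dU A * (dU B * dU C)) =>
              ((fst u, fst (snd u)), snd (snd u))) (fun (hk : (dU C -> (dU B -> dX A) * (dU A -> dX B)) *
                            (dU A * dU B -> dX C)) =>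
              ((fun bc => fst (fst hk (snd bc)) (fst bc)),
               (fun a => ((fun c => snd (fst hk c) a), (fun b => snd hk (a, b)))))) _).
  intros [a [b c]] [h k]; simpl. apply le_eq; symmetry; apply op_assoc.
Defined.

Definition curry_r {M} {A B C : DObj M} (f : DHom (dtensor A C) B) : DHom C (drimp A B).
Proof.
  refine (@Build_DHom _ C (drimp A B) (fun c => ((fun a => hf f (a, c)), (fun y => fst (hF f y) c))
                       : (dU A -> dU B) * (dX B -> dX A)) (fun (ay : dU A * dX B) => snd (hF f (snd ay)) (fst ay)) _).
  intros c [a y]; simpl. apply rimp_max. exact (hcond f (a, c) y).
Defined.

Definition curry_l {M} {A B C : DObj M} (f : DHom (dtensor C A) B) : DHom C (dlimp B A).
Proof.
  refine (@Build_DHom _ C (dlimp B A) (fun c => ((fun a => hf f (c, a)), (fun y => snd (hF f y) c))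
                       : (dU A -> dU B) * (dX B -> dX A)) (fun (ay : dU A * dX B) => fst (hF f (snd ay)) (fst ay)) _).
  intros c [a y]; simpl. apply limp_max. exact (hcond f (c, a) y).
Defined.

Definition ev_r {M} (A B : DObj M) : DHom (dtensor A (drimp A B)) B.
Proof.
  refine (@Build_DHom _ (dtensor A (drimp A B)) B (fun (u : dU A * ((dU A -> dU B) * (dX B -> dX A))) => fst (snd u) (fst u)) (fun y => ((fun (hH : (dU A -> dU B) * (dX B -> dX A)) => snd hH y),
                            (fun a => (a, y)))
              : (_ -> dX A) * (dU A -> dU A * dX B)) _).
  intros [a [h H]] y; simpl. apply rimp_in.
Defined.

Definition ev_l {M} (A B : DObj M) : DHom (dtensor (dlimp B A) A) B.
Proof.
  refine (@Build_DHom _ (dtensor (dlimp B A) A) B (fun (u : ((dU A -> dU B) * (dX B -> dX A)) * dU A) => fst (fst u) (snd u)) (fun y => ((fun a => (a, y)),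
                            (fun (hH : (dU A -> dU B) * (dX B -> dX A)) => snd hH y))
              : (dU A -> dU A * dX B) * (_ -> dX A)) _).
  intros [[h H] a] y; simpl. apply limp_in.
Defined.

Lemma hcompI {M} {A B C : DObj M} : inhabited (DHom B C) -> inhabited (DHom A B) -> inhabited (DHom A C).
Proof. intros [g] [f]; exact (inhabits (hcomp g f)). Qed.

Lemma htensI {M} {A A' B B' : DObj M} : inhabited (DHom A A') -> inhabited (DHom B B') ->
  inhabited (DHom (dtensor A B) (dtensor A' B')).
Proof. intros [f] [g]; exact (inhabits (htens f g)). Qed.

Lemma idI {M} (A : DObj M) : inhabited (DHom A A).
Proof. exact (inhabits (hid A)). Qed.

Lemma ctx_cons1 {M} (v : nat -> DObj M) A L :
  inhabited (DHom (interp_ctx v (A :: L)) (dtensor (interp v A) (interp_ctx v L))).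
Proof. destruct L. - exact (inhabits (runit_inv _)). - apply idI. Qed.

Lemma ctx_cons2 {M} (v : nat -> DObj M) A L :
  inhabited (DHom (dtensor (interp v A) (interp_ctx v L)) (interp_ctx v (A :: L))).
Proof. destruct L. - exact (inhabits (runit _)). - apply idI. Qed.

Lemma ctx_app {M} (v : nat -> DObj M) G D :
  inhabited (DHom (interp_ctx v (G ++ D)) (dtensor (interp_ctx v G) (interp_ctx v D))) /\
  inhabited (DHom (dtensor (interp_ctx v G) (interp_ctx v D)) (interp_ctx v (G ++ D))).
Proof.
  induction G as [|A G [IH1 IH2]]; simpl.
  - split; [exact (inhabits (lunit_inv _)) | exact (inhabits (lunit _))].
  - split.
    + eapply hcompI; [apply (htensI (ctx_cons2 v A G) (idI _))|].
      eapply hcompI; [exact (inhabits (hassoc_inv _ _ _))|].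
      eapply hcompI; [apply (htensI (idI _) IH1)|].
      apply ctx_cons1.
    + eapply hcompI; [apply ctx_cons2|].
      eapply hcompI; [apply (htensI (idI _) IH2)|].
      eapply hcompI; [exact (inhabits (hassoc _ _ _))|].
      apply (htensI (ctx_cons1 v A G) (idI _)).
Qed.

Lemma ctx_replace {M} (v : nat -> DObj M) D1 X Y D2 :
  inhabited (DHom (interp_ctx v X) (interp_ctx v Y)) ->
  inhabited (DHom (interp_ctx v (D1 ++ X ++ D2)) (interp_ctx v (D1 ++ Y ++ D2))).
Proof.
  intros h.
  eapply hcompI; [apply (proj2 (ctx_app v D1 (Y ++ D2)))|].
  eapply hcompI; [|apply (proj1 (ctx_app v D1 (X ++ D2)))].
  apply htensI; [apply idI|].
  eapply hcompI; [apply (proj2 (ctx_app v Y D2))|].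
  eapply hcompI; [|apply (proj1 (ctx_app v X D2))].
  apply htensI; [exact h | apply idI].
Qed.

Lemma soundness G B : derivable G B -> valid G B.
Proof.
  intros H M v. induction H.
  - apply idI.
  - eapply hcompI; [exact IHderivable2|].
    apply (ctx_replace v D1 G [A] D2). exact IHderivable1.
  - apply idI.
  - eapply hcompI; [exact IHderivable|].
    apply (ctx_replace v G [One] [] D). apply idI.
  - eapply hcompI; [exact IHderivable|].
    apply (ctx_replace v G [Tens A B] [A; B] D). apply idI.
  - eapply hcompI; [|apply (proj1 (ctx_app v G D))].
    apply htensI; assumption.
  - destruct IHderivable as [f].
    destruct (ctx_cons2 v A G) as [c].
    exact (inhabits (curry_r (hcomp f c))).
  - eapply hcompI; [exact IHderivable2|].
    replace (D1 ++ G ++ RImp A B :: D2) with (D1 ++ (G ++ [RImp A B]) ++ D2)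
      by (rewrite <- app_assoc; reflexivity).
    apply (ctx_replace v D1 _ [B] D2).
    eapply hcompI; [exact (inhabits (ev_r (interp v A) (interp v B)))|].
    eapply hcompI; [apply (htensI IHderivable1 (idI (interp v (RImp A B))))|].
    apply (proj1 (ctx_app v G [RImp A B])).
  - destruct IHderivable as [f].
    destruct (proj2 (ctx_app v G [B])) as [c].
    exact (inhabits (curry_l (hcomp f c))).
  - eapply hcompI; [exact IHderivable2|].
    apply (ctx_replace v D1 (LImp A B :: G) [A] D2).
    eapply hcompI; [exact (inhabits (ev_l (interp v B) (interp v A)))|].
    eapply hcompI; [apply (htensI (idI (interp v (LImp A B))) IHderivable1)|].
    apply ctx_cons1.
Qed.


Definition Dn (A : formula) : formula -> Prop := fun C => derivable [C] A.
Definition car0 := {P : formula -> Prop | exists A, P = Dn A}.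
Definition cls (A : formula) : car0 := exist _ (Dn A) (ex_intro _ A eq_refl).
Definition repr (p : car0) : formula :=
  proj1_sig (constructive_indefinite_description _ (proj2_sig p)).
Lemma repr_spec p : proj1_sig p = Dn (repr p).
Proof. unfold repr. destruct (constructive_indefinite_description _ _); simpl; auto. Qed.

Lemma cut1 A B C : derivable [A] B -> derivable [B] C -> derivable [A] C.
Proof. intros h1 h2. exact (d_cut [A] [] [] B C h1 h2). Qed.

Lemma cls_repr p : cls (repr p) = p.
Proof.
  destruct p as [P HP]. unfold cls. apply eq_sig_hprop.
  - intros; apply proof_irrelevance.
  - pose proof (repr_spec (exist _ P HP)) as E. simpl in E. simpl. rewrite <- E. reflexivity.
Qed.

Lemma cls_eq A B : derivable [A] B -> derivable [B] A -> cls A = cls B.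
Proof.
  intros h1 h2. unfold cls. apply eq_sig_hprop; [intros; apply proof_irrelevance|]. simpl.
  apply functional_extensionality; intro C; apply propositional_extensionality; unfold Dn;
  split; intro; eapply cut1; eauto.
Qed.

Lemma repr_cls A : derivable [repr (cls A)] A /\ derivable [A] (repr (cls A)).
Proof.
  pose proof (repr_spec (cls A)) as E. simpl in E.
  split.
  - assert (Dn A (repr (cls A))) by (rewrite E; apply d_ax). exact H.
  - assert (Dn (repr (cls A)) A) by (rewrite <- E; apply d_ax). exact H.
Qed.

Definition leL (p q : car0) : Prop := derivable [repr p] (repr q).
Definition opL (p q : car0) : car0 := cls (Tens (repr p) (repr q)).
Definition rimpL (p q : car0) : car0 := cls (RImp (repr p) (repr q)).
Definition limpL (q p : car0) : car0 := cls (LImp (repr q) (repr p)).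

Lemma leL_cls A B : leL (cls A) (cls B) <-> derivable [A] B.
Proof.
  unfold leL. destruct (repr_cls A) as [a1 a2]; destruct (repr_cls B) as [b1 b2].
  split; intro h.
  - exact (cut1 _ _ _ a2 (cut1 _ _ _ h b1)).
  - exact (cut1 _ _ _ a1 (cut1 _ _ _ h b2)).
Qed.

Lemma tens_mono a a' b b' : derivable [a] a' -> derivable [b] b' -> derivable [Tens a b] (Tens a' b').
Proof. intros h1 h2. apply (d_tensl [] []). exact (d_tensr [a] [b] a' b' h1 h2). Qed.

Lemma rimp_mono a a' b b' : derivable [a'] a -> derivable [b] b' -> derivable [RImp a b] (RImp a' b').
Proof. intros h1 h2. apply d_rimpr. exact (d_rimpl [a'] [] [] a b b' h1 h2). Qed.

Lemma limp_mono a a' b b' : derivable [a'] a -> derivable [b] b' -> derivable [LImp b a] (LImp b' a').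
Proof. intros h1 h2. apply d_limpr. exact (d_limpl [a'] [] [] b a b' h1 h2). Qed.

Lemma opL_cls A B : opL (cls A) (cls B) = cls (Tens A B).
Proof.
  unfold opL. destruct (repr_cls A) as [a1 a2]; destruct (repr_cls B) as [b1 b2].
  apply cls_eq; apply tens_mono; auto.
Qed.
Lemma rimpL_cls A B : rimpL (cls A) (cls B) = cls (RImp A B).
Proof.
  unfold rimpL. destruct (repr_cls A) as [a1 a2]; destruct (repr_cls B) as [b1 b2].
  apply cls_eq; apply rimp_mono; auto.
Qed.
Lemma limpL_cls A B : limpL (cls A) (cls B) = cls (LImp A B).
Proof.
  unfold limpL. destruct (repr_cls A) as [a1 a2]; destruct (repr_cls B) as [b1 b2].
  apply cls_eq; apply limp_mono; auto.
Qed.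

Ltac toF p := rewrite <- (cls_repr p); generalize (repr p); clear p; intro.

Definition M0 : BiclosedPoset.
Proof.
  refine {| car := car0; le := leL; op := opL; e := cls One; rimp := rimpL; limp := limpL |}.
  - intro a; toF a. apply leL_cls, d_ax.
  - intros a b c; toF a; toF b; toF c. rewrite !leL_cls. apply cut1.
  - intros a b; toF a; toF b. rewrite !leL_cls. apply cls_eq.
  - intros a b c; toF a; toF b; toF c. rewrite !opL_cls. apply cls_eq.
    + apply (d_tensl [] []). apply (d_tensl [] [f1]).
      exact (d_tensr [f] [f0; f1] _ _ (d_ax _) (d_tensr [f0] [f1] _ _ (d_ax _) (d_ax _))).
    + apply (d_tensl [] []). apply (d_tensl [f] []).
      exact (d_tensr [f; f0] [f1] _ _ (d_tensr [f] [f0] _ _ (d_ax _) (d_ax _)) (d_ax _)).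
  - intro a; toF a. rewrite opL_cls. apply cls_eq.
    + apply (d_tensl [] []). apply (d_Il [] [f]). apply d_ax.
    + exact (d_tensr [] [f] _ _ d_Ir (d_ax _)).
  - intro a; toF a. rewrite opL_cls. apply cls_eq.
    + apply (d_tensl [] []). apply (d_Il [f] []). apply d_ax.
    + exact (d_tensr [f] [] _ _ (d_ax _) d_Ir).
  - intros a a' b; toF a; toF a'; toF b. rewrite !opL_cls, !leL_cls. intro h.
    apply tens_mono; auto using d_ax.
  - intros a b b'; toF a; toF b; toF b'. rewrite !opL_cls, !leL_cls. intro h.
    apply tens_mono; auto using d_ax.
  - intros a b; toF a; toF b. rewrite rimpL_cls, opL_cls, leL_cls.
    apply (d_tensl [] []). exact (d_rimpl [f] [] [] _ _ _ (d_ax _) (d_ax _)).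
  - intros a b x; toF a; toF b; toF x. rewrite rimpL_cls, opL_cls, !leL_cls. intro h.
    apply d_rimpr. exact (d_cut [f; f1] [] [] _ _ (d_tensr [f] [f1] _ _ (d_ax _) (d_ax _)) h).
  - intros a b; toF a; toF b. rewrite limpL_cls, opL_cls, leL_cls.
    apply (d_tensl [] []). exact (d_limpl [f] [] [] _ _ _ (d_ax _) (d_ax _)).
  - intros a b x; toF a; toF b; toF x. rewrite limpL_cls, opL_cls, !leL_cls. intro h.
    apply d_limpr. exact (d_cut [f1; f] [] [] _ _ (d_tensr [f1] [f] _ _ (d_ax _) (d_ax _)) h).
Defined.

Definition v0 (n : nat) : DObj M0 := @mkDObj M0 unit unit (fun _ _ => cls (Atom n)).

Lemma interp_val A : (forall u x, drel (interp v0 A) u x = cls A) /\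
  inhabited (dU (interp v0 A)) /\ inhabited (dX (interp v0 A)).
Proof.
  induction A as [n| |A [IA [UA XA]] B [IB [UB XB]]|A [IA [UA XA]] B [IB [UB XB]]|A [IA [UA XA]] B [IB [UB XB]]];
    simpl.
  - repeat split; constructor; exact tt.
  - repeat split; constructor; exact tt.
  - destruct UA as [ua]; destruct UB as [ub]; destruct XA as [xa]; destruct XB as [xb].
    split; [|split; constructor; simpl].
    + intros [u1 u2] [h k]; simpl. rewrite IA, IB. apply opL_cls.
    + exact (ua, ub).
    + exact ((fun _ => xa), (fun _ => xb)).
  - destruct UA as [ua]; destruct UB as [ub]; destruct XA as [xa]; destruct XB as [xb].
    split; [|split; constructor; simpl].
    + intros [h H] [u y]; simpl. rewrite IA, IB. apply rimpL_cls.
    + exact ((fun _ => ub), (fun _ => xa)).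
    + exact (ua, xb).
  - destruct UA as [ua]; destruct UB as [ub]; destruct XA as [xa]; destruct XB as [xb].
    split; [|split; constructor; simpl].
    + intros [h H] [u y]; simpl. rewrite IA, IB. apply limpL_cls.
    + exact ((fun _ => ua), (fun _ => xb)).
    + exact (ub, xa).
Qed.

Fixpoint ctxF (G : list formula) : formula :=
  match G with
  | [] => One
  | [A] => A
  | A :: G' => Tens A (ctxF G')
  end.

Lemma ctx_val G : (forall u x, drel (interp_ctx v0 G) u x = cls (ctxF G)) /\
  inhabited (dU (interp_ctx v0 G)) /\ inhabited (dX (interp_ctx v0 G)).
Proof.
  induction G as [|A G IH].
  - simpl. repeat split; constructor; exact tt.
  - destruct G as [|B G].
    + apply interp_val.
    + destruct IH as [I [[ug] [xg]]].
      destruct (interp_val A) as [IA [[ua] [xa]]].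
      split; [|split; constructor].
      * intros [u1 u2] [h k]. change (opL (drel (interp v0 A) u1 (h u2))
           (drel (interp_ctx v0 (B :: G)) u2 (k u1)) = cls (Tens A (ctxF (B :: G)))).
        rewrite IA, I. apply opL_cls.
      * exact (ua, ug).
      * exact ((fun _ => xa), (fun _ => xg)).
Qed.

Lemma ctxF_der G : derivable G (ctxF G).
Proof.
  induction G as [|A G IH].
  - apply d_Ir.
  - destruct G as [|B G].
    + apply d_ax.
    + exact (d_tensr [A] (B :: G) _ _ (d_ax _) IH).
Qed.

Lemma completeness G B : valid G B -> derivable G B.
Proof.
  intros V. destruct (V M0 v0) as [f].
  destruct (ctx_val G) as [IG [[u] _]].
  destruct (interp_val B) as [IB [_ [y]]].
  pose proof (hcond f u y) as h. rewrite IG, IB in h.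
  assert (h' : derivable [ctxF G] B) by (apply leL_cls; exact h).
  pose proof (d_cut G [] [] _ _ (ctxF_der G) h') as r. simpl in r.
  rewrite app_nil_r in r. exact r.
Qed.

Theorem theorem1 :
  (forall (G : list formula) (B : formula), derivable G B -> valid G B) /\
  (forall (G : list formula) (B : formula), valid G B -> derivable G B).
Proof. split; [apply soundness | apply completeness]. Qed.
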